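(* Let $\mathcal L\subseteq\mathfrak P(S)$ be an algebraic lattice of sets, endowed with its Zariski topology, and let $\mathcal L_\mathrm{fin}$ be the set of its finitely generated elements. Then: (1) $\mathcal L$ with the Zariski topology is locally with maximum; (2) $\mathcal L_\mathrm{fin}$ is dense in $\mathcal L$ with respect to the constructible topology; (3) $\mathcal L_\mathrm{fin}$, with the subspace Zariski topology, is a spectral space if and only if $\mathcal L_\mathrm{fin}=\mathcal L$.
   Context: $S$ is a nonempty set. A family $\mathcal L\subseteq\mathfrak P(S)$ is an algebraic lattice of sets if it is closed under arbitrary intersections (so $S\in\mathcal L$) and under nonempty up-directed unions. For $F\subseteq S$ let $F^c$ be the intersection of all members of $\mathcal L$ containing $F$; an element $A\in\mathcal L$ is finitely generated if $A=F^c$ for some finite $F\subseteq S$. The Zariski topology on $\mathcal L$ has as basis of open sets the sets $\{A\in\mathcal L\mid G\subseteq A\}$, $G\subseteq S$ finite; with it $\mathcal L$ is a spectral space, and its specialization order is reverse inclusion. A spectral space is locally with maximum if every point has a local basis of open sets each having a maximum in the specialization order ($x\leq y$ iff $y\in\mathrm{Cl}(\{x\})$). The constructible topology is the coarsest topology in which all open quasi-compact sets are clopen. *)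

(* Defs.v *)
From Stdlib Require Import List.
Import ListNotations.

Set Implicit Arguments.

Definition set (X : Type) := X -> Prop.

Definition subset {X : Type} (A B : set X) : Prop := forall x, A x -> B x.
Definition setI {X : Type} (A B : set X) : set X := fun x => A x /\ B x.
Definition setD {X : Type} (A B : set X) : set X := fun x => A x /\ ~ B x.
Definition bigcup {X : Type} (F : set (set X)) : set X := fun x => exists U, F U /\ U x.
Definition bigcap {X : Type} (F : set (set X)) : set X := fun x => forall U, F U -> U x.
Definition finite_set {X : Type} (A : set X) : Prop :=
  exists s : list X, forall x, A x <-> In x s.

Section Generic.
Variable X : Type.

(* A topological space is given by a carrier P : set X and a family T of
   open subsets of P. *)
Definition is_topology (P : set X) (T : set (set X)) : Prop :=
  (forall U, T U -> subset U P) /\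
  T P /\
  (forall F, subset F T -> T (bigcup F)) /\
  (forall U V, T U -> T V -> T (setI U V)).

Definition is_closed (P : set X) (T : set (set X)) (C : set X) : Prop :=
  subset C P /\ T (setD P C).

Definition closure (P : set X) (T : set (set X)) (A : set X) : set X :=
  fun x => P x /\ forall U, T U -> U x -> exists y, A y /\ U y.

Definition spec_le (P : set X) (T : set (set X)) (x y : X) : Prop :=
  closure P T (fun z => z = x) y.

Definition quasi_compact (P : set X) (T : set (set X)) (K : set X) : Prop :=
  subset K P /\
  forall F, subset F T -> subset K (bigcup F) ->
    exists s : list (set X), (forall U, In U s -> F U) /\
      subset K (fun x => exists U, In U s /\ U x).

Definition T0 (P : set X) (T : set (set X)) : Prop :=
  forall x y, P x -> P y -> (forall U, T U -> (U x <-> U y)) -> x = y.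

Definition irreducible (P : set X) (T : set (set X)) (C : set X) : Prop :=
  (exists x, C x) /\
  forall C1 C2, is_closed P T C1 -> is_closed P T C2 ->
    subset C (fun x => C1 x \/ C2 x) -> subset C C1 \/ subset C C2.

Definition spectral (P : set X) (T : set (set X)) : Prop :=
  is_topology P T /\
  T0 P T /\
  quasi_compact P T P /\
  (forall U V, T U -> quasi_compact P T U -> T V -> quasi_compact P T V ->
     quasi_compact P T (setI U V)) /\
  (forall U, T U -> exists F, (forall V, F V -> T V /\ quasi_compact P T V) /\
     forall x, U x <-> bigcup F x) /\
  (forall C, is_closed P T C -> irreducible P T C ->
     exists x, C x /\ forall y, closure P T (fun z => z = x) y <-> C y).

Definition locally_with_maximum (P : set X) (T : set (set X)) : Prop :=
  forall x U, P x -> T U -> U x ->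
    exists V, T V /\ V x /\ subset V U /\
      exists m, V m /\ forall y, V y -> spec_le P T y m.

Definition subspace_top (T : set (set X)) (Q : set X) : set (set X) :=
  fun V => exists U, T U /\ forall x, V x <-> (U x /\ Q x).

Definition generated_top (P : set X) (B : set (set X)) : set (set X) :=
  fun U => forall T', is_topology P T' -> subset B T' -> T' U.

Definition constructible_top (P : set X) (T : set (set X)) : set (set X) :=
  generated_top P (fun U => (T U /\ quasi_compact P T U) \/
                            (exists V, T V /\ quasi_compact P T V /\
                                       forall x, U x <-> setD P V x)).

Definition dense_in (P : set X) (T : set (set X)) (A : set X) : Prop :=
  forall x, P x -> closure P T A x.

End Generic.

Section Lattice.
Variable S : Type.

Definition algebraic_lattice (L : set (set S)) : Prop :=
  (forall F, subset F L -> L (bigcap F)) /\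
  (forall F, subset F L -> (exists A, F A) ->
     (forall A B, F A -> F B -> exists C, F C /\ subset A C /\ subset B C) ->
     L (bigcup F)).

Definition gen_closure (L : set (set S)) (F : set S) : set S :=
  bigcap (fun A => L A /\ subset F A).

Definition finitely_generated (L : set (set S)) (A : set S) : Prop :=
  L A /\ exists F, finite_set F /\ A = gen_closure L F.

Definition L_fin (L : set (set S)) : set (set S) := finitely_generated L.

Definition zariski_basic (L : set (set S)) : set (set (set S)) :=
  fun B => exists G, finite_set G /\ forall A, B A <-> (L A /\ subset G A).

Definition zariski (L : set (set S)) : set (set (set S)) :=
  fun U => exists F, subset F (zariski_basic L) /\ forall A, U A <-> bigcup F A.

End Lattice.

(* Main.v *)
Require Import Defs.
From Stdlib Require Import List Classical FunctionalExtensionality PropExtensionality.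
Import ListNotations.
Set Implicit Arguments.

Definition lsub {S : Type} (l : list S) (A : set S) : Prop := forall x, In x l -> A x.
Definition cl {S : Type} (L : set (set S)) (l : list S) : set S :=
  gen_closure L (fun x => In x l).

Lemma cl_L S (L : set (set S)) l : algebraic_lattice L -> L (cl L l).
Proof. intros [H _]. apply H. intros A [HA _]. exact HA. Qed.

Lemma cl_sub S (L : set (set S)) l : lsub l (cl L l).
Proof. intros x Hx A [_ HA]. apply HA. exact Hx. Qed.

Lemma cl_min S (L : set (set S)) l A : L A -> lsub l A -> subset (cl L l) A.
Proof. intros HA Hl x Hx. apply Hx. split; auto. Qed.

Lemma cl_fin S (L : set (set S)) l : algebraic_lattice L -> L_fin L (cl L l).
Proof.
  intros H. split; [apply cl_L; auto|]. exists (fun x => In x l). split.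
  - exists l. tauto.
  - reflexivity.
Qed.

Lemma lsub_app_l S (l1 l2 : list S) A : lsub (l1 ++ l2) A -> lsub l1 A.
Proof. intros H x Hx. apply H. apply in_or_app. auto. Qed.
Lemma lsub_app_r S (l1 l2 : list S) A : lsub (l1 ++ l2) A -> lsub l2 A.
Proof. intros H x Hx. apply H. apply in_or_app. auto. Qed.
Lemma lsub_app S (l1 l2 : list S) A : lsub l1 A -> lsub l2 A -> lsub (l1 ++ l2) A.
Proof. intros H1 H2 x Hx. apply in_app_or in Hx. destruct Hx; auto. Qed.

Lemma open_char S (L : set (set S)) U :
  zariski L U <-> (subset U L /\ forall A, U A -> exists l, lsub l A /\
                     forall A', L A' -> lsub l A' -> U A').
Proof.
  split.
  - intros [F [HF HU]]. split.
    + intros A HA. apply HU in HA. destruct HA as [B [HB HBA]].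
      destruct (HF B HB) as [G [_ HG]]. apply HG in HBA. tauto.
    + intros A HA. pose proof HA as HA'. apply HU in HA'.
      destruct HA' as [B [HB HBA]]. destruct (HF B HB) as [G [[l Hl] HG]].
      exists l. split.
      * intros x Hx. apply HG in HBA. destruct HBA as [_ Hs]. apply Hs. apply Hl. exact Hx.
      * intros A' HA' Hl'. apply HU. exists B. split; auto. apply HG. split; auto.
        intros x Hx. apply Hl'. apply Hl. exact Hx.
  - intros [Hsub Hup]. exists (fun B => zariski_basic L B /\ subset B U). split.
    + intros B [HB _]. exact HB.
    + intros A. split.
      * intros HA. destruct (Hup A HA) as [l [Hl Hl']].
        exists (fun A' => L A' /\ lsub l A'). split; [split|].
        -- exists (fun x => In x l). split. exists l; tauto.
           intros A0; split; intros [H1 H2]; split; auto.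
        -- intros A' [H1 H2]. apply Hl'; auto.
        -- split; auto.
      * intros [B [[_ HBU] HB]]. apply HBU; exact HB.
Qed.

Lemma zariski_ext S (L : set (set S)) U V :
  zariski L U -> (forall A, U A <-> V A) -> zariski L V.
Proof.
  intros [F [HF HU]] H. exists F. split; auto. intros A. split; intro HA.
  - apply HU. apply H. exact HA.
  - apply H. apply HU. exact HA.
Qed.

Lemma basic_open S (L : set (set S)) l : zariski L (fun A => L A /\ lsub l A).
Proof.
  apply open_char. split. intros A [H _]; auto.
  intros A [HA Hl]. exists l. split; auto.
Qed.

Lemma open_pt S (L : set (set S)) s : zariski L (fun B => L B /\ B s).
Proof.
  apply zariski_ext with (fun A => L A /\ lsub [s] A). apply basic_open.
  intros A. split; intros [H1 H2]; split; auto.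
  apply H2. left; auto. intros x [<-|[]]; auto.
Qed.

Lemma lfin_list S (L : set (set S)) y : L_fin L y -> exists l, forall z, y z <-> cl L l z.
Proof.
  intros [_ [F [[l Hl] Heq]]]. exists l. subst y. intros z.
  unfold cl, gen_closure, bigcap. split; intros H U [HU1 HU2]; apply H; split; auto;
  intros w Hw; apply HU2; apply Hl; auto.
Qed.

Lemma qc_list S (L : set (set S)) (HL : algebraic_lattice L) (Gs : list (list S)) U :
  (forall A, U A <-> L A /\ exists l, In l Gs /\ lsub l A) ->
  quasi_compact L (zariski L) U.
Proof.
  intros HU. split.
  { intros A HA. apply HU in HA. tauto. }
  intros F HF Hcov.
  assert (Hpre : forall l, In l Gs -> exists V, F V /\ forall A, L A -> lsub l A -> V A).
  { intros l Hl. assert (Hc : U (cl L l)).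
    { apply HU. split. apply cl_L; auto. exists l. split; auto. apply cl_sub. }
    destruct (Hcov _ Hc) as [V [HV HVc]]. exists V. split; auto.
    destruct (proj1 (open_char L V) (HF V HV)) as [_ Hup].
    destruct (Hup _ HVc) as [l' [Hl' Hl'']].
    intros A HA HlA. apply Hl''; auto. intros w Hw. apply (@cl_min _ L l A); auto. }
  assert (Hind : forall Gs', (forall l, In l Gs' -> exists V, F V /\ forall A, L A -> lsub l A -> V A) ->
     exists s, (forall V, In V s -> F V) /\ forall l, In l Gs' -> forall A, L A -> lsub l A ->
       exists V, In V s /\ V A).
  { induction Gs' as [|l Gs' IH]; intros H.
    - exists []. split. intros V []. intros l [].
    - destruct (H l (or_introl eq_refl)) as [V [HV HVl]].
      destruct IH as [s [Hs1 Hs2]]. intros l' Hl'. apply H. right; auto.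
      exists (V :: s). split.
      + intros V' [<-|HV']; auto.
      + intros l' [<-|Hl'] A HA Hl'A.
        * exists V. split; [left; auto| auto].
        * destruct (Hs2 l' Hl' A HA Hl'A) as [V' [HV'1 HV'2]]. exists V'. split; [right; auto| auto]. }
  destruct (Hind Gs Hpre) as [s [Hs1 Hs2]]. exists s. split; auto.
  intros A HA. apply HU in HA. destruct HA as [HA [l [Hl HlA]]].
  exact (Hs2 l Hl A HA HlA).
Qed.

Lemma qc_open_char S (L : set (set S)) (HL : algebraic_lattice L) U :
  zariski L U -> quasi_compact L (zariski L) U ->
  exists Gs, forall A, U A <-> L A /\ exists l, In l Gs /\ lsub l A.
Proof.
  intros HU [_ Hq].
  pose (F := fun B => exists l, (forall A, B A <-> L A /\ lsub l A) /\ subset B U).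
  destruct (proj1 (open_char L U) HU) as [HUs HUup].
  destruct (Hq F) as [s [Hs1 Hs2]].
  - intros B [l [HB _]]. apply zariski_ext with (fun A => L A /\ lsub l A).
    apply basic_open. intros A. split; apply HB.
  - intros A HA. destruct (HUup A HA) as [l [Hl Hl']].
    exists (fun A => L A /\ lsub l A). split.
    + exists l. split. tauto. intros A' [H1 H2]. apply Hl'; auto.
    + split; auto.
  - assert (Hind : forall s', (forall B, In B s' -> F B) -> exists Gs,
       (forall l, In l Gs -> forall A, L A -> lsub l A -> U A) /\
       forall A, (exists B, In B s' /\ B A) -> exists l, In l Gs /\ lsub l A).
    { induction s' as [|B s' IH]; intros H.
      - exists []. split. intros l []. intros A [B [[] _]].
      - destruct (H B (or_introl eq_refl)) as [l [HB HBU]].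
        destruct IH as [Gs [HG1 HG2]]. intros B' HB'. apply H. right; auto.
        exists (l :: Gs). split.
        + intros l' [<-|Hl'] A HA Hl'A.
          * apply HBU. apply HB. auto.
          * apply (HG1 l'); auto.
        + intros A [B' [[<-|HB'] HA]].
          * exists l. split. left; auto. apply HB in HA. tauto.
          * destruct (HG2 A (ex_intro _ B' (conj HB' HA))) as [l' [H1 H2]].
            exists l'. split; [right|]; auto. }
    destruct (Hind s Hs1) as [Gs [HG1 HG2]]. exists Gs. intros A. split.
    + intros HA. split. apply HUs; auto. apply HG2. apply Hs2. auto.
    + intros [HA [l [Hl HlA]]]. apply (HG1 l); auto.
Qed.

Lemma spectral_L S (L : set (set S)) (HL : algebraic_lattice L) :
  spectral L (zariski L).
Proof.
  split; [|split; [|split; [|split; [|split]]]].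
  -
    split; [|split; [|split]].
    + intros U HU. apply (proj1 (open_char L U) HU).
    + apply open_char. split. intros A HA; auto.
      intros A HA. exists []. split. intros z []. intros; auto.
    + intros F HF. apply open_char. split.
      * intros A [U [HU HA]]. apply (proj1 (proj1 (open_char L U) (HF U HU))). auto.
      * intros A [U [HU HA]]. destruct (proj2 (proj1 (open_char L U) (HF U HU)) A HA)
          as [l [Hl Hl']]. exists l. split; auto. intros A' H1 H2. exists U. split; auto.
    + intros U V HU HV. apply open_char in HU. apply open_char in HV.
      destruct HU as [HU1 HU2]. destruct HV as [HV1 HV2]. apply open_char. split.
      * intros A [H _]; auto.
      * intros A [HUA HVA]. destruct (HU2 A HUA) as [l1 [Hl1 Hl1']].
        destruct (HV2 A HVA) as [l2 [Hl2 Hl2']]. exists (l1 ++ l2). split.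
        -- apply lsub_app; auto.
        -- intros A' H1 H2. split.
           ++ apply Hl1'; auto. eapply lsub_app_l; eauto.
           ++ apply Hl2'; auto. eapply lsub_app_r; eauto.
  -
    intros x y Hx Hy H. apply functional_extensionality. intros s.
    apply propositional_extensionality. split; intros Hs.
    + exact (proj2 (proj1 (H _ (open_pt L s)) (conj Hx Hs))).
    + exact (proj2 (proj2 (H _ (open_pt L s)) (conj Hy Hs))).
  -
    apply (qc_list HL [[]]). intros A. split.
    + intros HA. split; auto. exists []. split. left; auto. intros z [].
    + intros [HA _]; auto.
  -
    intros U V HU HUq HV HVq.
    destruct (qc_open_char HL HU HUq) as [Gs HG].
    destruct (qc_open_char HL HV HVq) as [Hs HH].
    apply (qc_list HL (flat_map (fun g => map (fun h => g ++ h) Hs) Gs)).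
    intros A. split.
    + intros [HUA HVA]. apply HG in HUA. apply HH in HVA.
      destruct HUA as [HA [g [Hg HgA]]]. destruct HVA as [_ [h [Hh HhA]]].
      split; auto. exists (g ++ h). split.
      * apply in_flat_map. exists g. split; auto. apply in_map_iff. exists h. split; auto.
      * apply lsub_app; auto.
    + intros [HA [p [Hp HpA]]]. apply in_flat_map in Hp. destruct Hp as [g [Hg Hp]].
      apply in_map_iff in Hp. destruct Hp as [h [<- Hh]]. split.
      * apply HG. split; auto. exists g. split; auto. eapply lsub_app_l; eauto.
      * apply HH. split; auto. exists h. split; auto. eapply lsub_app_r; eauto.
  -
    intros U HU. destruct (proj1 (open_char L U) HU) as [HUs HUup].
    exists (fun V => (exists l, forall A, V A <-> L A /\ lsub l A) /\ subset V U). split.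
    + intros V [[l Hl] _]. split.
      * apply zariski_ext with (fun A => L A /\ lsub l A). apply basic_open.
        intros A; split; apply Hl.
      * apply (qc_list HL [l]). intros A. split.
        -- intros HA. apply Hl in HA. destruct HA as [HA HlA]. split; auto.
           exists l. split; auto. left; auto.
        -- intros [HA [l' [[<-|[]] Hl'A]]]. apply Hl. auto.
    + intros x. split.
      * intros Hx. destruct (HUup x Hx) as [l [Hl Hl']].
        exists (fun A => L A /\ lsub l A). split.
        -- split. exists l; tauto. intros A [H1 H2]; apply Hl'; auto.
        -- split; auto.
      * intros [V [[_ HVU] HVx]]. apply HVU; auto.
  -
    intros C [HCs HCo] [[x0 Hx0] Hirr].
    assert (Hdown : forall x y, C x -> L y -> subset y x -> C y).
    { intros x y Hx Hy Hyx. apply NNPP. intros HnC.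
      destruct (proj1 (open_char L _) HCo) as [_ Hup].
      destruct (Hup y (conj Hy HnC)) as [l [Hl Hl']].
      assert (Hs : setD L C x). { apply Hl'. apply HCs; auto. intros w Hw. apply Hyx. apply Hl; auto. }
      destruct Hs as [_ Hs]. auto. }
    pose (D := fun d => exists l, d = cl L l /\ C d).
    assert (HDL : subset D L). { intros d [l [-> _]]. apply cl_L; auto. }
    assert (HDne : exists d, D d).
    { exists (cl L []). exists []. split; auto. apply (Hdown x0); auto. apply cl_L; auto.
      apply cl_min. apply HCs; auto. intros z []. }
    assert (Hbasic_closed : forall l, is_closed L (zariski L) (setD L (fun A => L A /\ lsub l A))).
    { intros l. split. intros A [H _]; auto.
      apply zariski_ext with (fun A => L A /\ lsub l A). apply basic_open.
      intros A. split.
      - intros [H1 H2]. split; auto. intros [_ H3]. auto.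
      - intros [H1 H2]. apply NNPP. intros H3. apply H2. split; auto. }
    assert (Hdir : forall A B, D A -> D B -> exists E, D E /\ subset A E /\ subset B E).
    { intros A B [l1 [-> HC1]] [l2 [-> HC2]].
      assert (Hy : exists y, C y /\ lsub l1 y /\ lsub l2 y).
      { apply NNPP. intros Hn.
        assert (Hcov : subset C (fun x => setD L (fun A => L A /\ lsub l1 A) x \/
                                           setD L (fun A => L A /\ lsub l2 A) x)).
        { intros y Hy. assert (Ly : L y) by (apply HCs; auto).
          destruct (classic (lsub l1 y)) as [H1|H1].
          - destruct (classic (lsub l2 y)) as [H2|H2].
            + exfalso. apply Hn. exists y. auto.
            + right. split; auto. intros [_ H]; auto.
          - left. split; auto. intros [_ H]; auto. }
        destruct (Hirr _ _ (Hbasic_closed l1) (Hbasic_closed l2) Hcov) as [H|H].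
        - destruct (H _ HC1) as [_ H']. apply H'. split. apply cl_L; auto. apply cl_sub.
        - destruct (H _ HC2) as [_ H']. apply H'. split. apply cl_L; auto. apply cl_sub. }
      destruct Hy as [y [Cy [H1 H2]]].
      exists (cl L (l1 ++ l2)). split; [|split].
      - exists (l1 ++ l2). split; auto. apply (Hdown y); auto. apply cl_L; auto.
        apply cl_min. apply HCs; auto. apply lsub_app; auto.
      - apply cl_min. apply cl_L; auto. eapply lsub_app_l. apply cl_sub.
      - apply cl_min. apply cl_L; auto. eapply lsub_app_r. apply cl_sub. }
    pose (g := bigcup D).
    assert (Lg : L g). { apply (proj2 HL); auto. }
    assert (Hfin : forall l, lsub l g -> exists d, D d /\ lsub l d).
    { induction l as [|a l IH]; intros H.
      - destruct HDne as [d Hd]. exists d. split; auto. intros z [].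
      - destruct (H a (or_introl eq_refl)) as [d1 [Hd1 Hd1a]].
        destruct IH as [d2 [Hd2 Hd2l]]. intros z Hz. apply H. right; auto.
        destruct (Hdir _ _ Hd1 Hd2) as [d3 [Hd3 [H13 H23]]].
        exists d3. split; auto. intros z [<-|Hz]; auto. }
    assert (Cg : C g).
    { apply NNPP. intros HnC.
      destruct (proj1 (open_char L _) HCo) as [_ Hup].
      destruct (Hup g (conj Lg HnC)) as [l [Hl Hl']].
      destruct (Hfin l Hl) as [d [Hd Hld]].
      destruct (Hl' d (HDL d Hd) Hld) as [_ H]. destruct Hd as [_ [_ Hd]]. auto. }
    exists g. split; auto. intros y. split.
    + intros [Hy Hcl]. apply NNPP. intros HnC.
      destruct (Hcl _ HCo (conj Hy HnC)) as [z [-> [_ H]]]. auto.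
    + intros Cy. split. apply HCs; auto. intros U HU HUy. exists g. split; auto.
      destruct (proj1 (open_char L U) HU) as [_ Hup].
      destruct (Hup y HUy) as [l [Hl Hl']]. apply Hl'; auto.
      intros w Hw. exists (cl L l). split.
      * exists l. split; auto. apply (Hdown y); auto. apply cl_L; auto. apply cl_min; auto; apply HCs; auto.
      * apply cl_sub; auto.
Qed.

Lemma closed_down S (L : set (set S)) (HL : algebraic_lattice L) C1 y1 y3 :
  is_closed (L_fin L) (subspace_top (zariski L) (L_fin L)) C1 ->
  L_fin L y1 -> ~ C1 y1 -> L_fin L y3 -> subset y1 y3 -> ~ C1 y3.
Proof.
  intros [_ [U [HU HUe]]] Hy1 Hn1 Hy3 H13 HC3.
  assert (U1 : U y1). { apply HUe. split; auto. }
  destruct (proj1 (open_char L U) HU) as [_ Hup].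
  destruct (Hup y1 U1) as [l [Hl Hl']].
  assert (U3 : U y3). { apply Hl'. apply Hy3. intros w Hw. apply H13. apply Hl. auto. }
  destruct (proj2 (HUe y3) (conj U3 Hy3)) as [_ H]. auto.
Qed.

Theorem proposition4p3 (S : Type) (HS : inhabited S) (L : set (set S))
  (HL : algebraic_lattice L) :
  locally_with_maximum L (zariski L) /\
  dense_in L (constructible_top L (zariski L)) (L_fin L) /\
  (spectral (L_fin L) (subspace_top (zariski L) (L_fin L)) <->
   (forall A, L_fin L A <-> L A)).
Proof.
  split; [|split].
  -
    intros x U Hx HU HUx. apply open_char in HU. destruct HU as [Hsub Hup].
    destruct (Hup x HUx) as [l [Hl Hl']].
    exists (fun A => L A /\ lsub l A). split; [|split; [|split]].
    + apply basic_open.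
    + split; auto.
    + intros A [HA HlA]. apply Hl'; auto.
    + exists (cl L l). split. split; [apply cl_L; auto | apply cl_sub].
      intros y [Hy Hly]. split. apply cl_L; auto.
      intros V HV HVm. exists y. split; auto.
      destruct (proj1 (open_char L V) HV) as [_ Hup2].
      destruct (Hup2 _ HVm) as [l2 [Hl2 Hl2']]. apply Hl2'; auto.
      intros z Hz. apply (@cl_min _ L l y); auto.
  -
    intros x Hx. split; auto. intros U HU HUx.
    pose (T' := fun U : set (set S) => subset U L /\ forall A, U A -> exists l, lsub l A /\
                  forall A', L A' -> lsub l A' -> subset A' A -> U A').
    assert (HT : T' U).
    { apply HU.
      - split; [|split; [|split]].
        + intros V [HV _]; auto.
        + split. intros A H; auto. intros A HA. exists []. split. intros z []. intros; auto.
        + intros F HF. split.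
          * intros A [V [HV HVA]]. apply (proj1 (HF V HV)); auto.
          * intros A [V [HV HVA]]. destruct (proj2 (HF V HV) A HVA) as [l [Hl Hl']].
            exists l. split; auto. intros A' H1 H2 H3. exists V. split; auto.
        + intros V W [HV1 HV2] [HW1 HW2]. split.
          * intros A [H _]; auto.
          * intros A [HVA HWA]. destruct (HV2 A HVA) as [l1 [Hl1 Hl1']].
            destruct (HW2 A HWA) as [l2 [Hl2 Hl2']]. exists (l1 ++ l2). split.
            -- apply lsub_app; auto.
            -- intros A' H1 H2 H3. split.
               ++ apply Hl1'; auto. eapply lsub_app_l; eauto.
               ++ apply Hl2'; auto. eapply lsub_app_r; eauto.
      - intros V [[HV _] | [W [HW [_ HVW]]]].
        + apply open_char in HV. destruct HV as [Hs Hup]. split; auto.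
          intros A HA. destruct (Hup A HA) as [l [Hl Hl']]. exists l. split; auto.
        + split.
          * intros A HA. apply HVW in HA. destruct HA; auto.
          * intros A HA. exists []. split. intros z [].
            intros A' H1 _ H3. apply HVW. apply HVW in HA. destruct HA as [HAL HnW].
            split; auto. intro HW'. apply HnW.
            destruct (proj1 (open_char L W) HW) as [_ Hup].
            destruct (Hup A' HW') as [l [Hl Hl']]. apply Hl'; auto.
            intros z Hz. apply H3. apply Hl. auto. }
    destruct HT as [_ HT]. destruct (HT x HUx) as [l [Hl Hl']].
    exists (cl L l). split. apply cl_fin; auto.
    apply Hl'. apply cl_L; auto. apply cl_sub. apply cl_min; auto.
  -
    split.
    + intros Hsp A. split. intros [H _]; exact H. intros HA.
      destruct Hsp as [_ [_ [_ [_ [_ Hsober]]]]].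
      pose (C := fun y => L_fin L y /\ subset y A).
      destruct (Hsober C) as [g [HCg Hg]].
      * split. intros y [H _]; exact H.
        exists (fun B => L B /\ ~ subset B A). split.
        -- apply open_char. split. intros B [H _]; auto.
           intros B [HB HnB]. apply not_all_ex_not in HnB. destruct HnB as [s Hs].
           apply imply_to_and in Hs. destruct Hs as [Hs1 Hs2].
           exists [s]. split. intros z [<-|[]]; auto.
           intros A' HA' Hl. split; auto. intros Hsub. apply Hs2. apply Hsub. apply Hl. left; auto.
        -- intros y. unfold setD, C. split.
           ++ intros [Hy Hn]. split; auto. split. apply Hy. intro Hsub. apply Hn. split; auto.
           ++ intros [[HyL Hn] Hy]. split; auto. intros [_ Hsub]. auto.
      * split.
        -- exists (cl L []). split. apply cl_fin; auto. apply cl_min; auto. intros z [].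
        -- intros C1 C2 HC1 HC2 Hcov. apply NNPP. intro Hn. apply not_or_and in Hn.
           destruct Hn as [Hn1 Hn2]. unfold subset in Hn1, Hn2.
           apply not_all_ex_not in Hn1. destruct Hn1 as [y1 Hy1].
           apply imply_to_and in Hy1. destruct Hy1 as [Cy1 nC1].
           apply not_all_ex_not in Hn2. destruct Hn2 as [y2 Hy2].
           apply imply_to_and in Hy2. destruct Hy2 as [Cy2 nC2].
           destruct (lfin_list (proj1 Cy1)) as [l1 Hl1].
           destruct (lfin_list (proj1 Cy2)) as [l2 Hl2].
           assert (Cy3 : C (cl L (l1 ++ l2))).
           { split. apply cl_fin; auto. apply cl_min; auto. apply lsub_app.
             - intros z Hz. apply (proj2 Cy1). apply Hl1. apply cl_sub; auto.
             - intros z Hz. apply (proj2 Cy2). apply Hl2. apply cl_sub; auto. }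
           assert (H13 : subset y1 (cl L (l1 ++ l2))).
           { intros z Hz. apply Hl1 in Hz. revert z Hz. apply cl_min. apply cl_L; auto.
             eapply lsub_app_l. apply cl_sub. }
           assert (H23 : subset y2 (cl L (l1 ++ l2))).
           { intros z Hz. apply Hl2 in Hz. revert z Hz. apply cl_min. apply cl_L; auto.
             eapply lsub_app_r. apply cl_sub. }
           destruct (Hcov _ Cy3) as [H|H].
           ++ exact (closed_down HL HC1 (proj1 Cy1) nC1 (proj1 Cy3) H13 H).
           ++ exact (closed_down HL HC2 (proj1 Cy2) nC2 (proj1 Cy3) H23 H).
      * assert (HAg : forall s, A s -> g s).
        { intros s Hs. assert (Cy : C (cl L [s])).
          { split. apply cl_fin; auto. apply cl_min; auto. intros z [<-|[]]; auto. }
          apply Hg in Cy. destruct Cy as [_ Hcl].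
          destruct (Hcl (fun B => (L B /\ B s) /\ L_fin L B)) as [z [-> [[_ Hz] _]]].
          - exists (fun B => L B /\ B s). split. apply open_pt. intros; tauto.
          - split. split. apply cl_L; auto. apply cl_sub; left; auto. apply cl_fin; auto.
          - exact Hz. }
        assert (Eq : A = g).
        { apply functional_extensionality. intros s. apply propositional_extensionality.
          split. apply HAg. apply (proj2 HCg). }
        rewrite Eq. exact (proj1 HCg).
    + intros H.
      assert (E2 : subspace_top (zariski L) (L_fin L) = zariski L).
      { apply functional_extensionality. intros V. apply propositional_extensionality. split.
        - intros [U [HU HUe]]. eapply zariski_ext; [exact HU|]. intros A. split.
          + intros HA. apply HUe. split; auto. apply H.
            apply (proj1 (proj1 (open_char L U) HU)); auto.
          + intros HA. apply HUe; auto.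
        - intros HV. exists V. split; auto. intros x. split; [intros Hx; split; auto|tauto].
          apply H. apply (proj1 (proj1 (open_char L V) HV)); auto. }
      assert (E : L_fin L = L).
      { apply functional_extensionality. intros A. apply propositional_extensionality. apply H. }
      rewrite E2, E. apply spectral_L; auto.
Qed.
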